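(* Let $M_t$ be the true model and $M_j$ any model in the class. (i) If $\dim(M_j)<\dim(M_t)$ then $\delta^*(M_t,M_j)>0$. (ii) If $\dim(M_j)=\dim(M_t)$ then $\delta^*(M_t,M_j)=0$ if $M_j=M_t$ and $\delta^*(M_t,M_j)>0$ if $M_j\neq M_t$. (iii) If $\dim(M_j)>\dim(M_t)$ then $\delta^*(M_t,M_j)=0$ if $M_t$ is nested in $M_j$ and $\delta^*(M_t,M_j)>0$ otherwise.
   Context: Normal linear regression with $k$ potential regressors and $n$ observations; a model $M_j$ contains the intercept and a subset of $j$ regressors, and $\dim(M_j)=j$; $M_t$ is nested in $M_j$ if the regressors of $M_t$ are among those of $M_j$. The true model $M_t$ has sampling distribution $N_n(\mathbf{y}\mid\mathbf{X}_{t+1}\boldsymbol\beta_{t+1},\sigma_t^2\mathbf{I}_n)$ with slope vector $\boldsymbol\beta_t$, all of whose regression coefficients are nonzero. Let $\Sigma^{(n)}_{t+j}=\begin{pmatrix}S^{(n)}_{tt}&S^{(n)}_{tj}\\S^{(n)}_{jt}&S^{(n)}_{jj}\end{pmatrix}$ be the (sample) covariance matrix of the joint set of covariates of $M_t$ and $M_j$, with $S^{(n)}_{tt},S^{(n)}_{jj}$ positive definite, let $S^{(n)}_{t\cdot j}=S^{(n)}_{tt}-S^{(n)}_{tj}(S^{(n)}_{jj})^{-1}S^{(n)}_{jt}$ and $S_{t\cdot j}=\lim_n S^{(n)}_{t\cdot j}$; the limiting covariance matrix of covariates is assumed to exist, and for distinct covariates to be positive definite. The pseudo-distance is $\delta_n(M_t,M_j)=\frac{1}{2\sigma_t^2}\boldsymbol\beta_t'S^{(n)}_{t\cdot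 j}\boldsymbol\beta_t$ (equivalently $\frac{1}{2\sigma_t^2}\boldsymbol\beta_t'\frac{\mathbf{X}_t'(\mathbf{I}-\mathbf{H}_j)\mathbf{X}_t}{n}\boldsymbol\beta_t$, $\mathbf{H}_j$ the hat matrix of $M_j$), and $\delta^*(M_t,M_j)=\lim_{n\to\infty}\delta_n(M_t,M_j)$. *)

(* Defs.v *)
From HB Require Import structures.
From mathcomp Require Import all_boot all_order all_algebra.
From mathcomp Require Import all_classical all_reals all_analysis.
Unset Printing Implicit Defensive.
Import Order.TTheory GRing.Theory Num.Theory.
Import numFieldNormedType.Exports.
Local Open Scope ring_scope.
Local Open Scope classical_set_scope.

(* Covariates are indexed by 'I_k; a model M_j is the set J : {set 'I_k} of its
   regressors (the intercept is always present and does not enter the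
   covariance of the covariates); dim(M_j) = #|J|. *)

Definition posdef {R : realFieldType} {m : nat} (A : 'M[R]_m) : Prop :=
  A^T = A /\ forall v : 'rV[R]_m, v != 0 -> 0 < (v *m A *m v^T) 0 0.

Definition subm {R : nzRingType} {k : nat} (S : 'M[R]_k) (A B : {set 'I_k})
  : 'M[R]_(#|A|, #|B|) :=
  \matrix_(i < #|A|, j < #|B|) S (enum_val i) (enum_val j).

Definition schur {R : fieldType} {k : nat} (S : 'M[R]_k) (T J : {set 'I_k})
  : 'M[R]_#|T| :=
  subm S T T - subm S T J *m invmx (subm S J J) *m subm S J T.

(* delta_n(M_t, M_j) = 1/(2 sigma_t^2) beta_t' S^{(n)}_{t.j} beta_t,
   where Sn n is the covariance matrix of the k covariates at sample size n. *)
Definition delta_n {R : realType} {k : nat} (Sn : nat -> 'M[R]_k) (s2 : R)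
  (T J : {set 'I_k}) (b : 'rV[R]_#|T|) (n : nat) : R :=
  (2 * s2)^-1 * (b *m schur (Sn n) T J *m b^T) 0 0.

Definition delta_star {R : realType} {k : nat} (Sn : nat -> 'M[R]_k) (s2 : R)
  (T J : {set 'I_k}) (b : 'rV[R]_#|T|) : R :=
  lim (delta_n Sn s2 T J b @ \oo).

(* Main.v *)
Require Import Defs.
From HB Require Import structures.
From mathcomp Require Import all_boot all_order all_algebra all_fingroup.
From mathcomp Require Import all_classical all_reals all_analysis.
Import Order.TTheory GRing.Theory Num.Theory.
Import numFieldNormedType.Exports.
Local Open Scope ring_scope.
Local Open Scope classical_set_scope.

Section Cvg.
Variable R : realType.
Definition Cv (f : nat -> R) (l : R) := f @ \oo --> l.

Lemma cvg_bigsum (I : Type) (r : seq I) (P : pred I) (f : I -> nat -> R) (l : I -> R) :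
  (forall i, Cv (f i) (l i)) ->
  Cv (fun n => \sum_(i <- r | P i) f i n) (\sum_(i <- r | P i) l i).
Proof.
move=> H; elim: r => [|a r IH].
  rewrite /Cv; under eq_fun do rewrite big_nil; rewrite big_nil; exact: cvg_cst.
rewrite /Cv; under eq_fun do rewrite big_cons; rewrite big_cons.
case: (P a) => //.
exact: (cvgD (H a) IH).
Qed.

Lemma cvg_bigprod (I : Type) (r : seq I) (P : pred I) (f : I -> nat -> R) (l : I -> R) :
  (forall i, Cv (f i) (l i)) ->
  Cv (fun n => \prod_(i <- r | P i) f i n) (\prod_(i <- r | P i) l i).
Proof.
move=> H; elim: r => [|a r IH].
  rewrite /Cv; under eq_fun do rewrite big_nil; rewrite big_nil; exact: cvg_cst.
rewrite /Cv; under eq_fun do rewrite big_cons; rewrite big_cons.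
case: (P a) => //.
exact: (cvgM (H a) IH).
Qed.

Definition mcvg {m p : nat} (A : nat -> 'M[R]_(m, p)) (L : 'M[R]_(m, p)) :=
  forall i j, Cv (fun n => A n i j) (L i j).

Lemma mcvg_cst m p (L : 'M[R]_(m,p)) : mcvg (fun=> L) L.
Proof. move=> i j; exact: cvg_cst. Qed.

Lemma mcvg_mul m p q (A : nat -> 'M[R]_(m,p)) (B : nat -> 'M[R]_(p,q)) LA LB :
  mcvg A LA -> mcvg B LB -> mcvg (fun n => A n *m B n) (LA *m LB).
Proof.
move=> HA HB i j; rewrite /Cv; under eq_fun do rewrite mxE; rewrite mxE.
have H := (@cvg_bigsum _ (index_enum _) xpredT (fun k n => A n i k * B n k j) (fun k => LA i k * LB k j)). apply: H => k.
exact: (cvgM (HA i k) (HB k j)).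
Qed.

Lemma mcvg_sub m p (A B : nat -> 'M[R]_(m,p)) LA LB :
  mcvg A LA -> mcvg B LB -> mcvg (fun n => A n - B n) (LA - LB).
Proof.
move=> HA HB i j; rewrite /Cv; under eq_fun do rewrite !mxE; rewrite !mxE.
exact: (cvgB (HA i j) (HB i j)).
Qed.

Lemma mcvg_scale m p (a : nat -> R) la (A : nat -> 'M[R]_(m,p)) LA :
  Cv a la -> mcvg A LA -> mcvg (fun n => a n *: A n) (la *: LA).
Proof.
move=> Ha HA i j; rewrite /Cv; under eq_fun do rewrite !mxE; rewrite !mxE.
exact: (cvgM Ha (HA i j)).
Qed.

Lemma mcvg_sel m p m' p' (f : 'I_m' -> 'I_m) (g : 'I_p' -> 'I_p) (A : nat -> 'M[R]_(m,p)) LA :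
  mcvg A LA -> mcvg (fun n => \matrix_(i, j) A n (f i) (g j)) (\matrix_(i, j) LA (f i) (g j)).
Proof.
move=> HA i j; rewrite /Cv; under eq_fun do rewrite !mxE; rewrite !mxE.
exact: HA.
Qed.

Lemma mcvg_det m (A : nat -> 'M[R]_m) LA : mcvg A LA -> Cv (fun n => \det (A n)) (\det LA).
Proof.
move=> HA; rewrite /Cv /determinant.
have H := (@cvg_bigsum _ (index_enum {perm 'I_m}) xpredT (fun s n => (-1) ^+ perm.odd_perm s * \prod_i A n i (s i)) (fun s => (-1) ^+ perm.odd_perm s * \prod_i LA i (s i))). apply: H => s.
apply: (cvgM (cvg_cst _)).
apply: (@cvg_bigprod _ _ _ (fun i n => A n i (s i))) => i.
exact: HA.
Qed.

Lemma mcvg_adj m (A : nat -> 'M[R]_m) LA : mcvg A LA -> mcvg (fun n => \adj (A n)) (\adj LA).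
Proof.
move=> HA i j; rewrite /Cv; under eq_fun do rewrite !mxE; rewrite !mxE /cofactor.
apply: (cvgM (cvg_cst _)).
apply: mcvg_det => a b; rewrite /Cv; under eq_fun do rewrite !mxE; rewrite !mxE.
exact: HA.
Qed.

Lemma mcvg_inv m (A : nat -> 'M[R]_m) LA : mcvg A LA ->
  (forall n, A n \in unitmx) -> LA \in unitmx -> mcvg (fun n => invmx (A n)) (invmx LA).
Proof.
move=> HA HU HL.
have -> : (fun n => invmx (A n)) = (fun n => (\det (A n))^-1 *: \adj (A n)).
  by apply: funext => n; rewrite /invmx HU.
rewrite /invmx HL; apply: mcvg_scale; last exact: mcvg_adj.
have hd : \det LA != 0 by rewrite -unitfE -unitmxE.
have hdc : Cv (fun n => \det (A n)) (\det LA) by apply: mcvg_det.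
exact: (cvgV hd hdc).
Qed.
End Cvg.
Section Alg.
Variable R : realType.
Variable k : nat.

Definition E (A : {set 'I_k}) : 'M[R]_(#|A|, k) :=
  \matrix_(i, x) (enum_val i == x)%:R.

Lemma EmulL A p (M : 'M[R]_(k, p)) i y : (E A *m M) i y = M (enum_val i) y.
Proof.
rewrite mxE (bigD1 (enum_val i)) //= mxE eqxx mul1r big1 ?addr0 // => x hx.
by rewrite mxE eq_sym (negbTE hx) mul0r.
Qed.

Lemma EmulR A p (M : 'M[R]_(p, k)) x j : (M *m (E A)^T) x j = M x (enum_val j).
Proof.
rewrite mxE (bigD1 (enum_val j)) //= !mxE eqxx mulr1 big1 ?addr0 // => y hy.
by rewrite !mxE eq_sym (negbTE hy) mulr0.
Qed.

Lemma EmulX_in (A : {set 'I_k}) p (X : 'M[R]_(p, #|A|)) i (x : 'I_k) (Hx : x \in A) :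
  (X *m E A) i x = X i (enum_rank_in Hx x).
Proof.
rewrite mxE (bigD1 (enum_rank_in Hx x)) //= mxE enum_rankK_in // eqxx mulr1.
rewrite big1 ?addr0 // => j hj; rewrite mxE.
case: eqP => [e|]; last by rewrite mulr0.
by move: hj; rewrite -{2}e enum_valK_in eqxx.
Qed.

Lemma EmulX_out (A : {set 'I_k}) p (X : 'M[R]_(p, #|A|)) i (x : 'I_k) :
  x \notin A -> (X *m E A) i x = 0.
Proof.
move=> hx; rewrite mxE big1 // => j _; rewrite mxE.
case: eqP => [e|]; last by rewrite mulr0.
by move: hx; rewrite -e enum_valP.
Qed.

Lemma subm_E (S : 'M[R]_k) (A B : {set 'I_k}) : subm S A B = E A *m S *m (E B)^T.
Proof. by apply/matrixP => i j; rewrite EmulR EmulL !mxE. Qed.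

Lemma posdef_unit m (A : 'M[R]_m) : posdef A -> A \in unitmx.
Proof.
move=> [_ HA]; rewrite -row_free_unit -kermx_eq0.
apply/negP => /negP hk.
have [i hi] : exists i, row i (kermx A) != 0.
  apply/existsP; apply: contraNT hk => /existsPn h.
  by apply/eqP/row_matrixP => i; rewrite row0; apply/eqP; move/negbNE: (h i).
have := HA _ hi.
by rewrite -row_mul mulmx_ker row0 mul0mx mxE ltxx.
Qed.

Lemma rv_nz m (v : 'rV[R]_m) : v != 0 -> exists i, v 0 i != 0.
Proof.
move=> hv; apply/existsP; apply: contraNT hv => /existsPn h.
by apply/eqP/matrixP => i j; rewrite ord1 mxE; apply/eqP; move/negbNE: (h j).
Qed.

Lemma posdef_sub (S : 'M[R]_k) A : posdef S -> posdef (subm S A A).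
Proof.
move=> [HT HP]; split.
  by apply/matrixP => i j; rewrite !mxE -{1}HT mxE.
move=> v hv; rewrite subm_E !mulmxA.
have -> : v *m E A *m S *m (E A)^T *m v^T = (v *m E A) *m S *m (v *m E A)^T by rewrite trmx_mul !mulmxA.
have [i hi] := @rv_nz _ v hv.
apply: HP; apply/negP => /eqP h0.
have := congr1 (fun M : 'rV[R]_k => M 0 (enum_val i)) h0.
rewrite (EmulX_in _ _ _ _ _ (enum_valP i)) enum_valK_in mxE => /eqP; exact/negP.
Qed.

Lemma quad_id (S : 'M[R]_k) (T J : {set 'I_k}) (b : 'rV[R]_#|T|) : S^T = S ->
  subm S J J \in unitmx ->
  b *m schur S T J *m b^T =
  (b *m E T - b *m subm S T J *m invmx (subm S J J) *m E J) *m S *m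
  (b *m E T - b *m subm S T J *m invmx (subm S J J) *m E J)^T.
Proof.
move=> HS HU.
rewrite /schur.
have HM : (invmx (subm S J J))^T = invmx (subm S J J).
  by rewrite trmx_inv !subm_E !trmx_mul trmxK HS !mulmxA.
have HMA : invmx (subm S J J) *m subm S J J = 1 by rewrite mulVmx.
move: HM HMA; set M := invmx _; clearbody M => HM HMA.
have HMA' : forall p (X : 'M[R]_(p, #|J|)), X *m M *m E J *m S *m (E J)^T = X.
  by move=> p X; rewrite -!mulmxA (mulmxA (E J)) -subm_E HMA mulmx1.
rewrite !subm_E; do 3! rewrite ?mulmxBl ?mulmxBr ?linearB /=.
rewrite !trmx_mul !trmxK HS HM !mulmxA.
by rewrite HMA' opprK addNr addr0.
Qed.

Lemma x_nz (T J : {set 'I_k}) (b : 'rV[R]_#|T|) (c : 'rV[R]_#|J|) i0 :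
  i0 \in T -> i0 \notin J -> (forall i, b 0 i != 0) -> b *m E T - c *m E J != 0.
Proof.
move=> hT hJ hb; apply/negP => /eqP h0.
have := congr1 (fun M : 'rV[R]_k => M 0 i0) h0.
have -> : (b *m E T - c *m E J) 0 i0 = (b *m E T) 0 i0 - (c *m E J) 0 i0.
  by rewrite [LHS]mxE [X in _ + X]mxE.
rewrite (EmulX_in _ _ _ _ _ hT) (EmulX_out _ _ _ _ _ hJ) subr0 mxE => /eqP.
exact/negP.
Qed.

Lemma x_zero (S : 'M[R]_k) (T J : {set 'I_k}) (b : 'rV[R]_#|T|) :
  T \subset J -> subm S J J \in unitmx ->
  b *m E T - b *m subm S T J *m invmx (subm S J J) *m E J = 0.
Proof.
move=> hTJ HU.
have hQ : E T *m (E J)^T *m E J = E T.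
  apply/matrixP => i y; case: (boolP (y \in J)) => hy.
    by rewrite (EmulX_in _ _ _ _ _ hy) EmulR enum_rankK_in.
  rewrite (EmulX_out _ _ _ _ _ hy) mxE; case: eqP => // e.
  by move: hy; rewrite -e (fintype.subsetP hTJ) // enum_valP.
have -> : subm S T J = E T *m (E J)^T *m subm S J J.
  by rewrite !subm_E !mulmxA hQ.
by rewrite -!mulmxA (mulmxA (subm S J J)) mulmxV // mul1mx (mulmxA (E T)) hQ subrr.
Qed.
End Alg.

Theorem lemma3 (R : realType) (k : nat)
  (Sn : nat -> 'M[R]_k) (S : 'M[R]_k)
  (Hlim : forall i j : 'I_k, (fun n => Sn n i j) @ \oo --> S i j)
  (HS : posdef S)
  (T : {set 'I_k}) (beta : 'rV[R]_#|T|) (s2 : R)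
  (Hbeta : forall i, beta 0 i != 0) (Hs2 : 0 < s2)
  (J : {set 'I_k})
  (HSnT : forall n : nat, posdef (subm (Sn n) T T))
  (HSnJ : forall n : nat, posdef (subm (Sn n) J J)) :
  let conv := cvg (delta_n Sn s2 T J beta @ \oo) in
  let d := delta_star Sn s2 T J beta in
  [/\ (#|J| < #|T|)%N -> conv /\ 0 < d,
      #|J| = #|T| ->
        (J = T -> conv /\ d = 0) /\ (J <> T -> conv /\ 0 < d)
    & (#|T| < #|J|)%N ->
        (T \subset J -> conv /\ d = 0) /\ (~~ (T \subset J) -> conv /\ 0 < d)].
Proof.
move=> conv d.
have HST : S^T = S := HS.1.
have HU : subm S J J \in unitmx := @posdef_unit R _ _ (@posdef_sub R k S J HS).
set q := (beta *m schur S T J *m beta^T) 0 0.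
have hm : @mcvg R _ _ (fun n => beta *m schur (Sn n) T J *m beta^T) (beta *m schur S T J *m beta^T).
  have hsel : forall A B : {set 'I_k}, @mcvg R _ _ (fun n => subm (Sn n) A B) (subm S A B).
    move=> A B; rewrite /subm; apply: mcvg_sel; exact: Hlim.
  apply: mcvg_mul; last exact: mcvg_cst.
  apply: mcvg_mul; first exact: mcvg_cst.
  rewrite /schur.
  apply: mcvg_sub; first exact: hsel.
  apply: mcvg_mul; last exact: hsel.
  apply: mcvg_mul; first exact: hsel.
  apply: mcvg_inv; first exact: hsel.
    by move=> n; apply: posdef_unit.
  exact: HU.
have Hc : Cv R (delta_n Sn s2 T J beta) ((2 * s2)^-1 * q).
  have h00 := hm 0 0. rewrite /Cv /delta_n. exact: (cvgMl_tmp h00).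
have Hconv : conv by apply/cvg_ex; exists ((2 * s2)^-1 * q).
have Hd : d = (2 * s2)^-1 * q by apply: cvg_lim.
have Hq : T \subset J -> q = 0.
  by move=> hTJ; rewrite /q quad_id // x_zero // !mul0mx mxE.
have Hqp : ~~ (T \subset J) -> 0 < q.
  move=> /subsetPn [i0 hT hJ]; rewrite /q quad_id //; apply: HS.2; exact: (@x_nz R k T J beta _ i0 hT hJ Hbeta).
have Hpos : 0 < (2 * s2)^-1 by rewrite invr_gt0 mulr_gt0.
split.
- move=> hlt; split => //; rewrite Hd mulr_gt0 // Hqp //.
  by apply: contraTN hlt => h; rewrite -leqNgt; apply: subset_leq_card.
- move=> heq; split => [hJT|hne]; split => //.
    by rewrite Hd Hq ?mulr0 // hJT subxx.
  rewrite Hd mulr_gt0 // Hqp //; apply/negP => h; apply: hne.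
  by apply/setP => x; apply/esym; move/subset_cardP: h => /(_ (esym heq)).
- move=> hlt; split => [h|h]; split => //; rewrite Hd.
    by rewrite Hq ?mulr0.
  by rewrite mulr_gt0 // Hqp.
Qed.
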